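(* Let $k\ge 2$ be an integer and define distributions $\mathbf{p},\mathbf{q}$ on $[k]=\{1,\dots,k\}$ as follows. If $k$ is even: $\mathbf{p}_i=0$ for even $i$, $\mathbf{p}_i=\frac{1}{2^{k-1}}\binom{k}{i}$ for odd $i$; $\mathbf{q}_i=\frac{1}{2^{k-1}-1}\binom{k}{i}$ for even $i$, $\mathbf{q}_i=0$ for odd $i$. If $k$ is odd: $\mathbf{p}_i=\frac{1}{2^{k-1}-1}\binom{k}{i}$ for even $i$, $\mathbf{p}_i=0$ for odd $i$; $\mathbf{q}_i=0$ for even $i$, $\mathbf{q}_i=\frac{1}{2^{k-1}}\binom{k}{i}$ for odd $i$. Then: (1) $\mathbf{p}_k=0$ and $\mathbf{q}_k\ge \frac{1}{2^k}$; (2) for any random variables $X_A\sim\mathbf{p}$ and $X_B\sim\mathbf{q}$, $X_A$ and $X_B$ have $k-1$ proportional moments.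
   Context: Two random variables $X_1,X_2$ have $k-1$ proportional moments if $\frac{\mathbf{E}[X_2]}{\mathbf{E}[X_1]}=\frac{\mathbf{E}[X_2^2]}{\mathbf{E}[X_1^2]}=\cdots=\frac{\mathbf{E}[X_2^{k-1}]}{\mathbf{E}[X_1^{k-1}]}$. *)

(* Defs.v *)
From mathcomp Require Import all_boot all_order all_algebra.
Set Implicit Arguments. Unset Strict Implicit. Unset Printing Implicit Defensive.
Import Order.TTheory GRing.Theory Num.Theory.
Local Open Scope ring_scope.

Definition distP (R : realFieldType) (k i : nat) : R :=
  if ~~ odd k then
    (if odd i then 'C(k, i)%:R / (2 ^+ k.-1) else 0)
  else
    (if ~~ odd i then 'C(k, i)%:R / (2 ^+ k.-1 - 1) else 0).

Definition distQ (R : realFieldType) (k i : nat) : R :=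
  if ~~ odd k then
    (if ~~ odd i then 'C(k, i)%:R / (2 ^+ k.-1 - 1) else 0)
  else
    (if odd i then 'C(k, i)%:R / (2 ^+ k.-1) else 0).

Definition moment (R : realFieldType) (d : nat -> R) (k j : nat) : R :=
  \sum_(1 <= i < k.+1) d i * (i%:R) ^+ j.

Definition proportional_moments (R : realFieldType) (k : nat) (m1 m2 : nat -> R) : Prop :=
  forall j l : nat, (1 <= j <= k.-1)%N -> (1 <= l <= k.-1)%N ->
    m2 j / m1 j = m2 l / m1 l.

(* Main.v *)
Require Import Defs.
From mathcomp Require Import all_boot all_order all_algebra ring lra zify.
Import Order.TTheory GRing.Theory Num.Theory.
Local Open Scope ring_scope.

Lemma alt0 (R : realFieldType) (k : nat) : forall (a j : nat), (j < k)%N ->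
  \sum_(i < k.+1) (-1) ^+ i * 'C(k, i)%:R * ((i + a)%:R : R) ^+ j = 0.
Proof.
elim: k => [|k IH] a j hj //.
have step : \sum_(i < k.+2) (-1) ^+ i * 'C(k.+1, i)%:R * ((i + a)%:R : R) ^+ j =
  \sum_(i < k.+1) (-1) ^+ i * 'C(k, i)%:R * (((i + a)%:R : R) ^+ j - ((i + a.+1)%:R : R) ^+ j).
  rewrite big_ord_recl.
  under eq_bigr => i _ do rewrite ?lift0 binS natrD mulrDr mulrDl.
  rewrite big_split /= addrA.
  have -> : (-1) ^+ 0 * 'C(k.+1, 0)%:R * ((0 + a)%:R : R) ^+ j +
     \sum_(i < k.+1) (-1) ^+ i.+1 * 'C(k, i.+1)%:R * ((i.+1 + a)%:R : R) ^+ j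
     = \sum_(i < k.+1) (-1) ^+ i * 'C(k, i)%:R * ((i + a)%:R : R) ^+ j.
    rewrite [RHS]big_ord_recl bin0.
    congr (_ + _); first by rewrite bin0.
    rewrite big_ord_recr /= bin_small // mulr0 mul0r addr0.
    by apply: eq_bigr => i _; rewrite /bump leq0n add1n.
  rewrite -big_split; apply: eq_bigr => i _.
  rewrite /= exprS addSnnS; ring.
rewrite step.
under eq_bigr => i _ do rewrite addnS -natr1 exprD1n big_ord_recr /= binn mulr1n opprD addrCA subrr addr0 mulrN.
rewrite sumrN; apply/eqP; rewrite oppr_eq0; apply/eqP.
under eq_bigr => i _ do rewrite mulr_sumr.
rewrite exchange_big /= big1 // => m _.
rewrite (eq_bigr (fun i : 'I_k.+1 => ((-1) ^+ i * 'C(k, i)%:R * ((i + a)%:R : R) ^+ m) *+ 'C(j, m))); last by move=> i _; rewrite (mulrnAr ((-1) ^+ i * 'C(k, i)%:R : R)).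
rewrite sumrMnl IH ?mul0rn //.
have := ltn_ord m. lia.
Qed.

Definition Osum (R : realFieldType) (k j : nat) : R :=
  \sum_(1 <= i < k.+1) (if odd i then 'C(k, i)%:R * (i%:R : R) ^+ j else 0).
Definition Esum (R : realFieldType) (k j : nat) : R :=
  \sum_(1 <= i < k.+1) (if ~~ odd i then 'C(k, i)%:R * (i%:R : R) ^+ j else 0).

Lemma OE (R : realFieldType) k j : (0 < j)%N -> (j < k)%N -> Osum R k j = Esum R k j.
Proof.
move=> j0 jk; apply/eqP; rewrite eq_sym -subr_eq0; apply/eqP.
have := @alt0 R k 0 j jk.
rewrite -(big_mkord xpredT (fun i => (-1) ^+ i * 'C(k, i)%:R * ((i + 0)%:R : R) ^+ j)).
rewrite big_ltn // expr0n /= eqn0Ngt j0 /= mulr0 add0r => <-.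
rewrite /Osum /Esum -sumrB; apply: eq_bigr => i _.
rewrite addn0 -signr_odd; case: (odd i) => /=; rewrite ?subr0 ?sub0r ?expr1 ?expr0; ring.
Qed.

Lemma Opos (R : realFieldType) k j : (0 < k)%N -> 0 < Osum R k j.
Proof.
move=> k0; rewrite /Osum big_ltn ?ltnS // /= bin1 expr1n mulr1.
apply: ltr_wpDr; last by rewrite ltr0n.
apply: sumr_ge0 => i _; case: ifP => _ //.
by rewrite mulr_ge0 ?exprn_ge0 ?ler0n.
Qed.

Lemma momP_even (R : realFieldType) k j : ~~ odd k ->
  moment (distP R k) k j = Osum R k j / 2 ^+ k.-1.
Proof.
move=> ek; rewrite /moment /Osum big_distrl; apply: eq_bigr => i _.
by rewrite /distP ek; case: (odd i) => /=; rewrite ?mul0r // mulrAC.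
Qed.
Lemma momQ_even (R : realFieldType) k j : ~~ odd k ->
  moment (distQ R k) k j = Esum R k j / (2 ^+ k.-1 - 1).
Proof.
move=> ek; rewrite /moment /Esum big_distrl; apply: eq_bigr => i _.
by rewrite /distQ ek; case: (odd i) => /=; rewrite ?mul0r // mulrAC.
Qed.
Lemma momP_odd (R : realFieldType) k j : odd k ->
  moment (distP R k) k j = Esum R k j / (2 ^+ k.-1 - 1).
Proof.
move=> ek; rewrite /moment /Esum big_distrl; apply: eq_bigr => i _.
by rewrite /distP ek; case: (odd i) => /=; rewrite ?mul0r // mulrAC.
Qed.
Lemma momQ_odd (R : realFieldType) k j : odd k ->
  moment (distQ R k) k j = Osum R k j / 2 ^+ k.-1.
Proof.
move=> ek; rewrite /moment /Osum big_distrl; apply: eq_bigr => i _.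
by rewrite /distQ ek; case: (odd i) => /=; rewrite ?mul0r // mulrAC.
Qed.

Lemma ratio (R : realFieldType) (S a b : R) : S != 0 -> a != 0 -> b != 0 ->
  (S / b) / (S / a) = a / b.
Proof. by move=> hS ha hb; field; rewrite hS ha hb. Qed.

Theorem lemma3 (R : realFieldType) (k : nat) (hk : (2 <= k)%N) :
  (distP R k k = 0 /\ 1 / 2 ^+ k <= distQ R k k) /\
  proportional_moments k (moment (distP R k) k) (moment (distQ R k) k).
Proof.
have h2 : (2 : R) <= 2 ^+ k.-1.
  case: k hk => [|[|n]] // _ /=; rewrite exprS -[X in X <= _]mulr1.
  by rewrite ler_pM2l ?ltr0n // exprn_ege1 ?ler1n.
have t0 : (0 : R) < 2 ^+ k.-1 by apply: lt_le_trans h2.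
have t1 : (0 : R) < 2 ^+ k.-1 - 1 by rewrite subr_gt0; apply: lt_le_trans h2; rewrite ltr1n.
have tk : (2 : R) ^+ k = 2 * 2 ^+ k.-1 by case: k hk {h2 t0 t1} => // n _; rewrite exprS.
split.
  rewrite /distP /distQ binn; case: (boolP (odd k)) => ok /=; split => //.
    rewrite tk !div1r lef_pV2 ?posrE ?mulr_gt0 //; lra.
  rewrite tk !div1r lef_pV2 ?posrE ?mulr_gt0 //; lra.
have key : forall j, (1 <= j <= k.-1)%N ->
  moment (distQ R k) k j / moment (distP R k) k j =
  if odd k then (2 ^+ k.-1 - 1) / 2 ^+ k.-1 else 2 ^+ k.-1 / (2 ^+ k.-1 - 1).
  move=> j /andP [j1 jk].
  have jk' : (j < k)%N by case: k hk jk {h2 t0 t1 tk} => // n _.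
  have Sn : Osum R k j != 0 by rewrite gt_eqF // Opos //; apply: leq_trans hk.
  case: (boolP (odd k)) => ok.
    by rewrite momQ_odd // momP_odd // -(@OE R k j j1 jk') ratio // ?gt_eqF.
  by rewrite momQ_even // momP_even // -(@OE R k j j1 jk') ratio // ?gt_eqF.
by move=> j l hj hl; rewrite !key.
Qed.
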